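(* Let $0<\alpha<\infty$ and define $\chi_\alpha(s)=\mu(Fix(s))^\alpha$ for $s\in S(2^\infty)$. If $\chi_\alpha$ is a character on $S(2^\infty)$, then $\alpha\in\mathbb{N}$.
   Context: Let $X=\{0,1\}^{\mathbb{N}}$ with product measure $\mu=\nu^{\otimes\infty}$, $\nu(\{0\})=\nu(\{1\})=1/2$; $X_n=\{0,1\}^n$; $S(2^n)$ the group of all bijections of $X_n$, acting on $X$ by $s((x,a))=(s(x),a)$ for $x\in X_n$, $a\in X$; $S(2^\infty)=\bigcup_n S(2^n)$; $Fix(s)=\{x\in X:s(x)=x\}$. A character on a group $G$ is a function $\chi:G\to\mathbb{C}$ with $\chi(g_1g_2)=\chi(g_2g_1)$ for all $g_1,g_2$, $(\chi(g_ig_j^{-1}))_{i,j=1}^n$ positive semidefinite for all $n$ and $g_1,\dots,g_n$, and $\chi(e)=1$. *)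

(* Defs.v *)
From HB Require Import structures.
From mathcomp Require Import all_boot all_order all_algebra all_fingroup.
From mathcomp Require Import boolp classical_sets reals exp.
From mathcomp Require Import complex.

Set Implicit Arguments.
Unset Strict Implicit.
Unset Printing Implicit Defensive.

Import Order.TTheory GRing.Theory Num.Theory.
Local Open Scope classical_set_scope.
Local Open Scope ring_scope.

(* X = {0,1}^N, points are infinite binary sequences (0 = false, 1 = true). *)
Definition X := nat -> bool.

Definition prefix (n : nat) (w : X) : n.-tuple bool :=
  [tuple w (nat_of_ord i) | i < n].

Definition ext (n : nat) (t : n.-tuple bool) : X := fun i => nth false t i.

(* action of s in S(2^n) = {perm X_n} on X :  s((x,a)) = (s(x), a) *)
Definition act (n : nat) (s : {perm (n.-tuple bool)}) : X -> X :=
  fun w i => if (i < n)%N then nth false (s (prefix n w)) i else w i.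

(* S(2^infty) = union of the S(2^n), as a group of bijections of X under
   composition *)
Definition S2inf : set (X -> X) :=
  [set g | exists (n : nat) (s : {perm (n.-tuple bool)}), g = act s].

Definition Fix (g : X -> X) : set X := [set w | g w = w].

(* The Bernoulli(1/2) product measure mu on cylinder sets.
   A is an n-cylinder if membership in A only depends on the first n
   coordinates; then mu(A) = #{t in X_n | t x X subset A} / 2^n. *)
Definition cyl_at (n : nat) (A : set X) : Prop :=
  forall w w', prefix n w = prefix n w' -> (A w <-> A w').

Definition cyl_mass {R : realType} (n : nat) (A : set X) : R :=
  (#|[set t : n.-tuple bool | `[< A (ext t) >] ]|%:R / 2 ^+ n).

Definition cyl_level (A : set X) : nat := xget 0%N [set n | cyl_at n A].

(* mu(A) for a cylinder set A (the value for non-cylinder sets is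
   irrelevant: mu is only ever applied to sets Fix(s), s in S(2^infty),
   which are cylinder sets). *)
Definition mu {R : realType} (A : set X) : R := cyl_mass (cyl_level A) A.

Definition chi_alpha {R : realType} (alpha : R) (g : X -> X) : R[i] :=
  ((mu (Fix g)) `^ alpha)%:C%C.

(* A character on the group S(2^infty) (elements are bijections of X,
   product is composition, h is the inverse of g iff g \o h = h \o g = id). *)
Definition is_character {R : realType} (chi : (X -> X) -> R[i]) : Prop :=
  [/\ (forall g1 g2, S2inf g1 -> S2inf g2 -> chi (g1 \o g2) = chi (g2 \o g1)),
      (forall (N : nat) (g ginv : 'I_N -> (X -> X)),
          (forall i, [/\ S2inf (g i), S2inf (ginv i),
                        g i \o ginv i = id & ginv i \o g i = id]) ->
          forall c : 'I_N -> R[i],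
            0 <= \sum_(i < N) \sum_(j < N)
                   (c i)^* * chi (g i \o ginv j) * c j)
    & chi id = 1].

(* Main.v *)
From Pilot Require Import Defs.
From HB Require Import structures.
From mathcomp Require Import all_boot all_order all_algebra all_fingroup.
From mathcomp Require Import boolp classical_sets reals topology normedtype derive exp.
From mathcomp Require Import complex.
From mathcomp Require Import ring.
Import Order.TTheory GRing.Theory Num.Theory.
Import Pilot.Defs.
Import numFieldNormedType.Exports.
Local Open Scope ring_scope.
Section A.
Context {R : realType}.

Lemma is_derive_aff (f : R -> R) (a b x df : R) :
  is_derive (a * x + b) 1 f df -> is_derive x 1 (fun y => f (a * y + b)) (a * df).
Proof.
move=> hf.
have hl : is_derive x 1 (fun y => a * y + b) a.
  have h1 := is_deriveD (is_deriveZ a (@is_derive_id _ _ x 1)) (@is_derive_cst _ _ _ b x 1).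
  by move: h1; rewrite /GRing.scale /= mulr1 addr0.
have da : derivable (fun y => a * y + b) x 1 by case: hl.
have dfx : derivable f (a * x + b) 1 by case: hf.
apply: DeriveDef.
  apply/derivable1_diffP.
  have -> : (fun y => f (a * y + b)) = f \o (fun y => a * y + b) by [].
  apply: differentiable_comp; first exact/derivable1_diffP.
  exact/derivable1_diffP.
rewrite -derive1E.
have -> : (fun y => f (a * y + b)) = f \o (fun y => a * y + b) by [].
rewrite derive1_comp // !derive1E !derive_val mulrC //.
Qed.
End A.
Section B.
Context {R : realType}.
Local Open Scope classical_set_scope.
Definition Dop (f : R -> R) : R -> R := fun x => f x - f (x + 1).
Definition Dn m (f : R -> R) := iter m Dop f.

Lemma Dn_sign (m : nat) : forall (G : nat -> R -> R) (L : R), m%:R < L ->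
  (forall i x, (i < m)%N -> x < L -> is_derive x 1 (G i) (- G i.+1 x)) ->
  (forall x, x < L -> G m x < 0) -> Dn m (G 0%N) 0 < 0.
Proof.
elim: m => [|m IH] G L hL hd hneg.
  by rewrite /Dn /=; apply: hneg.
rewrite /Dn iterSr.
apply: (IH (fun i => Dop (G i)) (L - 1)).
- by rewrite ltrBrDr natr1.
- move=> i x hi hx.
  have hx1 : x < L by apply: lt_le_trans hx _; rewrite lerBlDr lerDl.
  have hx2 : 1 * x + 1 < L by rewrite mul1r -ltrBrDr.
  have h1 := hd i x (ltnW hi) hx1.
  have h2 := @is_derive_aff R _ _ _ _ _ (hd i _ (ltnW hi) hx2).
  have h3 := is_deriveB h1 h2.
  apply: is_derive_eq.
    have -> : Dop (G i) = (fun y => G i y - G i (1 * y + 1)).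
      by apply/funext => y /=; rewrite mul1r.
    exact: h3.
  by rewrite /Dop !mul1r opprB opprK addrC.
- move=> x hx.
  have hx1 : x + 1 < L by rewrite -ltrBrDr.
  have hlt : x < x + 1 by rewrite ltrDl.
  have hdm : forall y, x <= y <= x + 1 -> is_derive y 1 (G m) (- G m.+1 y).
    move=> y /andP [_ hy]; apply: hd => //; exact: le_lt_trans hy hx1.
  have hd2 : forall y, y \in `]x, x + 1[%R -> is_derive y 1 (G m) (- G m.+1 y).
    move=> y; rewrite in_itv /= => /andP [h1 h2]; apply: hdm.
    by rewrite !ltW.
  have hc2 : {within `[x, x + 1], continuous (G m)}.
    apply: derivable_within_continuous => y; rewrite in_itv /= => hy.
    by case: (hdm y hy).
  have [c hc hmvt] := @MVT R (G m) (fun y => - G m.+1 y) x (x + 1) hlt hd2 hc2.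
  rewrite /Dop subr_lt0 -subr_gt0 hmvt mulNr addrAC subrr add0r mulr1 oppr_gt0.
  apply: hneg; move: hc; rewrite in_itv /= => /andP [_ h2].
  exact: lt_trans h2 hx1.
Qed.
End B.
Section C.
Context {R : realType}.
Definition fall (a : R) i := \prod_(j < i) (a - j%:R).

Lemma key (a e : R) (m : nat) : 0 < e -> m%:R < e^-1 -> fall a m < 0 ->
  Dn m (fun x => (1 - e * x) `^ a) 0 < 0.
Proof.
move=> e0 hm hf.
pose G i x := e ^+ i * fall a i * ((- e) * x + 1) `^ (a - i%:R).
have -> : (fun x => (1 - e * x) `^ a) = G 0%N.
  apply/funext => x; rewrite /G expr0 /fall big_ord0 !mul1r subr0.
  by rewrite addrC mulNr.
apply: (@Dn_sign R m G _ hm).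
- move=> i x _ hx.
  have hpos : 0 < - e * x + 1.
    by rewrite mulNr addrC subr_gt0 mulrC -ltr_pdivlMr // mul1r.
  have h1 := is_derive1_powR (a - i%:R) hpos.
  have h2 := @is_derive_aff R _ _ _ _ _ h1.
  have h3 := is_deriveZ (e ^+ i * fall a i) h2.
  have h4 : G i = (e ^+ i * fall a i) \*: (fun y => (- e * y + 1) `^ (a - i%:R)) by [].
  rewrite h4; eapply is_derive_eq; [exact h3|].
  rewrite /G /fall big_ord_recr /= exprS -natr1 opprD addrA /GRing.scale /=.
  ring.
- move=> x hx.
  have hpos : 0 < - e * x + 1.
    by rewrite mulNr addrC subr_gt0 mulrC -ltr_pdivlMr // mul1r.
  rewrite /G pmulr_llt0; first by rewrite pmulr_rlt0 // exprn_gt0.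
  exact: powR_gt0.
Qed.
End C.
Section D.
Context {R : realType}.
Definition Psum (m : nat) (f : R -> R) :=
  \sum_(k < m.+1) ('C(m, k)%:R * (-1) ^+ k * f k%:R).

Lemma Psum_S m f : Psum m.+1 f = Psum m (Dop f).
Proof.
rewrite /Psum /Dop.
pose g k := (-1) ^+ k * f k%:R : R.
have e1 : forall k, 'C(m, k)%:R * (-1) ^+ k * (f k%:R - f (k%:R + 1)) =
   'C(m, k)%:R * g k + 'C(m, k)%:R * g k.+1.
  move=> k; rewrite /g exprS -natr1; ring.
under [RHS]eq_bigr do rewrite e1.
rewrite big_split /=.
rewrite big_ord_recl bin0 /=.
under eq_bigr do rewrite binS natrD mulrDl mulrDl.

rewrite big_split /=.
rewrite [X in _ = X + _]big_ord_recl bin0 /=.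
rewrite [X in _ + (X + _) = _]big_ord_recr /= bin_small // mul0r mul0r addr0.
rewrite /g /bump /= -!addrA; congr (_ + (_ + _)); first ring.
  by apply: eq_bigr => i _; rewrite mulrA.
by apply: eq_bigr => i _; rewrite mulrA.
Qed.

Lemma Psum_Dn m : forall f, Psum m f = Dn m f 0.
Proof.
elim: m => [|m IH] f.
  by rewrite /Psum big_ord_recl big_ord0 /Dn /= bin0 expr0 !mul1r addr0.
by rewrite Psum_S IH /Dn iterSr.
Qed.

Lemma fall_neg (a : R) (k : nat) : k%:R < a -> a < k.+1%:R -> fall a k.+2 < 0.
Proof.
move=> h1 h2; rewrite /fall big_ord_recr /= pmulr_rlt0; first by rewrite subr_lt0.
apply: prodr_gt0 => j _; rewrite subr_gt0; apply: le_lt_trans h1.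
by rewrite ler_nat -ltnS.
Qed.
End D.
Local Open Scope ring_scope.

Lemma prefix_ext n (t : n.-tuple bool) : prefix n (ext t) = t.
Proof.
by apply: eq_from_tnth => i; rewrite /prefix tnth_mktuple /ext (tnth_nth false).
Qed.

Lemma prefix_act n (s : {perm (n.-tuple bool)}) w : prefix n (act s w) = s (prefix n w).
Proof.
by apply: eq_from_tnth => i; rewrite /prefix tnth_mktuple /act ltn_ord (tnth_nth false).
Qed.

Lemma act_comp n (s t : {perm (n.-tuple bool)}) : act s \o act t = act (t * s)%g.
Proof.
apply/funext => w; apply/funext => i; rewrite /act /= prefix_act permM.
by case: (i < n)%N.

Qed.

Lemma nth_prefix n w i : (i < n)%N -> nth false (prefix n w) i = w i.
Proof.
move=> hi; have -> : nth false (prefix n w) i = tnth (prefix n w) (Ordinal hi).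
  by rewrite (tnth_nth false).
by rewrite tnth_mktuple.
Qed.

Lemma act1 n : act (1%g : {perm (n.-tuple bool)}) = id.
Proof.
apply/funext => w; apply/funext => i; rewrite /act perm1.
by case: ifP => // hi; rewrite nth_prefix.
Qed.

Lemma Fix_act n (s : {perm (n.-tuple bool)}) w :
  Fix (act s) w <-> s (prefix n w) = prefix n w.
Proof.
rewrite /Fix /=; split => [h | h].
  by rewrite -prefix_act h.
apply/funext => i; rewrite /act; case: ifP => // hi.
by rewrite h nth_prefix.
Qed.

Section Split.
Variable p : nat.
Definition fsp (x : p.-tuple bool * bool) : p.+1.-tuple bool := [tuple of rcons x.1 x.2].

Lemma fsp_inj : injective fsp.
Proof.
move=> [u b] [u' b'] /(congr1 val) /= /rcons_inj [/val_inj -> ->] //.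
Qed.

Lemma fsp_bij : bijective fsp.
Proof.
apply: inj_card_bij fsp_inj _.
by rewrite card_prod !card_tuple card_bool expnS mulnC.
Qed.

Lemma count_split (P : pred (p.-tuple bool)) (Q : pred (p.+1.-tuple bool)) :
  (forall u b, Q (fsp (u, b)) = P u) ->
  #|[set t | Q t]| = (#|[set u | P u]| * 2)%N.
Proof.
move=> hQ; have [g fK gK] := fsp_bij.
have -> : [set t | Q t] = fsp @: [set x | P x.1].
  apply/setP => t; rewrite inE; apply/idP/imsetP.
    move=> qt; exists (g t); last by rewrite gK.
    rewrite inE; move: qt; rewrite -{1}(gK t); case: (g t) => u b /=.
    by rewrite hQ.
  by move=> [[u b] hx ->]; rewrite hQ; move: hx; rewrite inE.
rewrite (card_imset _ fsp_inj).
have -> : [set x : p.-tuple bool * bool | P x.1] = finset.setX [set u | P u] [set: bool].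
  by apply/setP => -[u b]; rewrite !inE andbT.
by rewrite cardsX cardsT card_bool.
Qed.

Lemma prefix_fsp u b : prefix p (ext (fsp (u, b))) = u.
Proof.
apply: eq_from_tnth => i; rewrite tnth_mktuple /ext /= nth_rcons size_tuple ltn_ord.
by rewrite (tnth_nth false).
Qed.
End Split.

Section Mass.
Context {R : realType}.

Lemma cyl_mass_P n (A : set X) (P : pred (n.-tuple bool)) :
  (forall t, A (ext t) <-> P t) -> cyl_mass n A = #|[set t | P t]|%:R / 2 ^+ n :> R.
Proof.
move=> h; rewrite /cyl_mass; congr (_%:R / _).
apply: eq_card => t; rewrite inE.
apply/idP/idP.
  by rewrite in_setE => /asboolP /h.
by move=> /h hA; rewrite in_setE; apply/asboolP.
Qed.

Lemma cyl_mono k d (A : set X) : cyl_at k A -> cyl_at (k + d) A.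
Proof.
move=> h w w' e; apply: h; apply: eq_from_tnth => i.
have hi : (i < k + d)%N by rewrite ltn_addr.
have := congr1 (fun t => tnth t (Ordinal hi)) e.
by rewrite !tnth_mktuple.
Qed.

Lemma mass_S k (A : set X) : cyl_at k A -> cyl_mass k.+1 A = cyl_mass k A :> R.
Proof.
move=> hc.
rewrite (@cyl_mass_P k.+1 A (fun t => `[< A (ext t) >])); last first.
  by move=> t; split => [/asboolP|/asboolP].
rewrite (@cyl_mass_P k A (fun t => `[< A (ext t) >])); last first.
  by move=> t; split => [/asboolP|/asboolP].
rewrite (@count_split k (fun t => `[< A (ext t) >])); last first.
  have e : forall u b, prefix k (ext (@fsp k (u, b))) = prefix k (ext u).
    by move=> u b; rewrite prefix_fsp prefix_ext.
  move=> u b; apply/idP/idP => /asboolP h; apply/asboolP.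
    exact: (proj1 (hc _ _ (e u b)) h).
  exact: (proj2 (hc _ _ (e u b)) h).
rewrite natrM exprS; field; by rewrite expf_neq0 // pnatr_eq0.
Qed.

Lemma mass_add k d (A : set X) : cyl_at k A -> cyl_mass (k + d) A = cyl_mass k A :> R.
Proof.
move=> hc; elim: d => [|d IH]; first by rewrite addn0.
by rewrite addnS mass_S ?IH //; apply: cyl_mono.
Qed.

Lemma mu_cyl n (A : set X) : cyl_at n A -> mu A = cyl_mass n A :> R.
Proof.
move=> hn; rewrite /mu /cyl_level.
have hk := @xgetPex _ 0%N [set n | cyl_at n A] (ex_intro _ n hn).
set k := xget _ _ in hk *.
rewrite -(@mass_add k n A hk) -(@mass_add n k A hn) addnC //.
Qed.
End Mass.

Lemma mu_Fix {R : realType} n (s : {perm (n.-tuple bool)}) :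
  mu (Fix (act s)) = #|[set t | s t == t]|%:R / 2 ^+ n :> R.
Proof.
rewrite (@mu_cyl R n).
  apply: cyl_mass_P => t; rewrite Fix_act prefix_ext; split => [->|/eqP] //.
move=> w w' e; rewrite !Fix_act e //.
Qed.

Section Sig.
Variable m : nat.
Definition rr (i : 'I_m) : m.-tuple bool := [tuple (j == i) | j < m].
Lemma rr_inj : injective rr.
Proof.
move=> i j /(congr1 (fun t => tnth t i)); rewrite !tnth_mktuple eqxx.
by move/esym/eqP.
Qed.

Definition inR (C : {set 'I_m}) (u : m.-tuple bool) := [exists i, (i \in C) && (u == rr i)].
Definition symd (A B : {set 'I_m}) := (A :\: B) :|: (B :\: A).

Lemma inR_rr C i : inR C (rr i) = (i \in C).
Proof.
apply/existsP/idP => [[j /andP [hj /eqP /rr_inj ->]] //|hi].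
by exists i; rewrite hi eqxx.
Qed.

Lemma inR_symd A B u : inR (symd A B) u = inR A u (+) inR B u.
Proof.
case: (boolP [exists i, u == rr i]) => [/existsP [i /eqP ->]|hn].
  rewrite !inR_rr /symd !inE.
  by case: (i \in A); case: (i \in B).
have h : forall C, inR C u = false.
  move=> C; apply/negbTE/negP => /existsP [i /andP [_ hi]].
  by move/negP: hn; apply; apply/existsP; exists i.
by rewrite !h.
Qed.

Definition gsp (t : m.+1.-tuple bool) : m.-tuple bool * bool :=
  ([tuple tnth t (widen_ord (leqnSn m) i) | i < m], tnth t ord_max).

Lemma fspK : cancel (@fsp m) gsp.
Proof.
move=> [u b]; rewrite /gsp /fsp; congr (_, _).
  apply: eq_from_tnth => i; rewrite tnth_mktuple !(tnth_nth false) /=.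
  by rewrite nth_rcons size_tuple ltn_ord.
by rewrite (tnth_nth false) /= nth_rcons size_tuple ltnn eqxx.
Qed.

Lemma gspK : cancel gsp (@fsp m).
Proof.
have [g fK gK] := fsp_bij m.
by move=> t; rewrite -(gK t) fspK.
Qed.

Definition flip (C : {set 'I_m}) (x : m.-tuple bool * bool) := (x.1, x.2 (+) inR C x.1).

Definition sigf C (t : m.+1.-tuple bool) := @fsp m (flip C (gsp t)).

Lemma sigf_inv C : involutive (sigf C).
Proof.
move=> t; rewrite /sigf fspK /flip; case E: (gsp t) => [u b] /=.
by rewrite -addbA addbb addbF -E gspK.
Qed.

Definition sig C : {perm (m.+1.-tuple bool)} := perm (inv_inj (sigf_inv C)).

Lemma sigM A B : (sig B * sig A)%g = sig (symd A B).
Proof.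
apply/permP => t; rewrite permM !permE /sigf fspK /flip /=.
by rewrite inR_symd -addbA [inR B _ (+) _]addbC.
Qed.

Lemma sig2 A : (sig A * sig A)%g = 1%g.
Proof. by apply/permP => t; rewrite permM perm1 !permE sigf_inv. Qed.

Lemma card_fix C : #|[set t | sig C t == t]| = ((2 ^ m - #|C|) * 2)%N.
Proof.
rewrite (@count_split m (fun u => ~~ inR C u)); last first.
  move=> u b; rewrite permE /sigf fspK /flip /=.
  apply/idP/idP => [/eqP /fsp_inj []|hn].
    by case: (inR C u); case: b.
  by rewrite (negbTE hn) addbF.
congr (_ * _)%N.
have -> : [set u | ~~ inR C u] = ~: (rr @: C).
  apply/setP => u; rewrite !inE; congr (~~ _).
  apply/existsP/imsetP => [[i /andP [hi /eqP ->]]|[i hi ->]]; first by exists i.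
  by exists i; rewrite hi eqxx.
rewrite cardsCs finset.setCK (card_imset _ rr_inj); congr subn.
by have := card_tuple m bool; rewrite card_bool.
Qed.
End Sig.
Arguments symd {m}.
Arguments inR {m}.
Arguments sig {m}.
Arguments rr {m}.

Section Final.
Context {R : realType}.

Lemma sign_symd m (A B : {set 'I_m}) :
  (-1 : R) ^+ #|A| * (-1) ^+ #|B| = (-1) ^+ #|symd A B|.
Proof.
have hA := cardsID B A.
have hB := cardsID A B.
have hS : #|symd A B| = (#|A :\: B| + #|B :\: A|)%N.
  rewrite /symd cardsU.
  have -> : (A :\: B) :&: (B :\: A) = finset.set0.
    by apply/setP => i; rewrite !inE; case: (i \in A); case: (i \in B).
  by rewrite cards0 subn0.
rewrite -hA -hB hS finset.setIC !exprD.
have hx : (-1 : R) ^+ #|B :&: A| * (-1) ^+ #|B :&: A| = 1.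
  by rewrite -exprMn mulrNN mulr1 expr1n.
by rewrite mulrACA hx mul1r.
Qed.

Lemma symdK m (A : {set 'I_m}) : involutive (symd A).
Proof.
move=> B; apply/setP => i; rewrite /symd !inE.
by case: (i \in A); case: (i \in B).
Qed.

Lemma sum_card m (F : R -> R) :
  \sum_(C : {set 'I_m}) (-1) ^+ #|C| * F #|C|%:R = Psum m F.
Proof.
rewrite (partition_big (fun C : {set 'I_m} => (inord #|C| : 'I_m.+1)) predT) //.
rewrite /Psum; apply: eq_bigr => k _.
have hle : forall C : {set 'I_m}, (#|C| < m.+1)%N.
  by move=> C; rewrite ltnS; have := max_card C; rewrite card_ord.
rewrite (eq_bigl (fun C => C \in [set C : {set 'I_m} | #|C| == k])); last first.
  move=> C; rewrite !inE /= -val_eqE /= inordK //.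
rewrite (eq_bigr (fun _ => (-1) ^+ k * F k%:R)); last first.
  by move=> C; rewrite inE => /eqP ->.
by rewrite sumr_const card_draws card_ord -[RHS]mulrA mulr_natl.
Qed.
End Final.

Lemma mu_sig {R : realType} m (C : {set 'I_m}) :
  mu (Fix (act (sig C))) = 1 - (2 ^+ m)^-1 * #|C|%:R :> R.
Proof.
rewrite mu_Fix card_fix natrM natrB; last first.
  apply: leq_trans (max_card C) _; rewrite card_ord.
  exact: ltnW (ltn_expl _ (ltnSn 1)).
rewrite natrX exprS; field.
by rewrite expf_neq0 // pnatr_eq0.
Qed.

Lemma cpos {R : realType} (x : R) : (0 <= x%:C)%C -> 0 <= x.
Proof. by rewrite /Order.le /= => /andP [_ h]. Qed.

Theorem mainTheorem9 (R : realType) (alpha : R) (halpha : 0 < alpha) :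
  is_character (chi_alpha alpha) -> exists k : nat, alpha = k%:R.
Proof.
move=> [_ hpsd _].
case: (pselect (exists k : nat, alpha = k%:R)) => // hn; exfalso.
set k := Num.truncn alpha.
have /andP [hk1 hk2] := Num.Theory.truncn_itv (ltW halpha).
have hk1' : k%:R < alpha.
  rewrite lt_neqAle hk1 andbT; apply/negP => /eqP e; apply: hn; by exists k.
set m := k.+2.
set e : R := (2 ^+ m)^-1.
pose F := fun x : R => (1 - e * x) `^ alpha.
have hneg : Psum m F < 0.
  rewrite Psum_Dn; apply: key.
  - by rewrite invr_gt0 exprn_gt0.
  - by rewrite invrK -natrX ltr_nat ltn_expl.
  - exact: fall_neg.
pose N := #|{: {set 'I_m}}|.
pose g := fun i : 'I_N => act (sig (enum_val i)).
pose c := fun i : 'I_N => (((-1) ^+ #|enum_val i| : R)%:C)%C.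
have hg : forall i, [/\ S2inf (g i), S2inf (g i), g i \o g i = id & g i \o g i = id].
  move=> i; have hS : S2inf (g i) by exists m.+1, (sig (enum_val i)).
  by split => //; rewrite /g act_comp sig2 act1.
have := hpsd N g g hg c.
pose S := fun A B : {set 'I_m} => (-1) ^+ #|A| * F #|symd A B|%:R * (-1) ^+ #|B|.
have hcr : forall x : R, Num.conj (x%:C)%C = (x%:C)%C := fun x => conjc_real x.
have hterm : forall i j, (c i)^* * chi_alpha alpha (g i \o g j) * c j
    = ((S (enum_val i) (enum_val j))%:C)%C.
  move=> i j; rewrite /g act_comp sigM /chi_alpha mu_sig /c hcr.
  by rewrite -!rmorphM.
under eq_bigr do under eq_bigr do rewrite hterm.
under eq_bigr do rewrite -rmorph_sum.
rewrite -rmorph_sum => /cpos.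
have e1 : forall G : {set 'I_m} -> R,
    \sum_(i < N) G (enum_val i) = \sum_(A : {set 'I_m}) G A.
  move=> G; symmetry; exact: (big_enum_val G).
under eq_bigr do rewrite (e1 (fun B => S (enum_val _) B)).
rewrite (e1 (fun A => \sum_B S A B)).
have e2 : forall A, \sum_B S A B = Psum m F.
  move=> A; rewrite -sum_card (reindex_inj (inv_inj (@symdK m A))).
  by apply: eq_bigr => B _; rewrite /S (@symdK m A) mulrAC sign_symd (@symdK m A).
under eq_bigr do rewrite e2.
rewrite sumr_const -mulr_natr.
have hN : (0 < #|{: {set 'I_m}}|)%N by apply/card_gt0P; exists finset.set0.
by rewrite pmulr_lge0 ?ltr0n // leNgt hneg.

Qed.
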